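(* Let $J$ be a set and let $L_1,L_2$ be symmetric lists with values in $J$. (1) If there is a morphism $L_1\to L_2$ in $\mathrm{SList}(J)$, then $L_2$ is linear if and only if $L_1$ is linear. (2) If $L_1$ or $L_2$ is linear, there is at most one morphism $L_1\to L_2$ in $\mathrm{SList}(J)$.
   Context: $\mathrm{SList}(J)$ is the category of symmetric lists on $J$: objects are finite lists of elements of $J$; morphisms are generated by $\mathrm{sw}_{a,b,l}:a::b::l\to b::a::l$ (for $a,b\in J$, lists $l$) and $x::_mf:x::l\to x::l'$ (for $f:l\to l'$, $x\in J$), subject to: functoriality of $x::_m-$, naturality of $\mathrm{sw}_{a,b,l}$ in $l$, $\mathrm{sw}_{b,a,l}\circ\mathrm{sw}_{a,b,l}=\mathrm{Id}$, and $\mathrm{sw}_{b,c,a::l}\circ(b::_m\mathrm{sw}_{a,c,l})\circ\mathrm{sw}_{a,b,c::l}=(c::_m\mathrm{sw}_{a,b,l})\circ\mathrm{sw}_{a,c,b::l}\circ(a::_m\mathrm{sw}_{b,c,l})$. A symmetric list is linear if its underlying list has no duplicate entries. *)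

(* Defs.v *)
(* The category SList(J) presented by generators and relations:
   morphisms are formal composites of generators (SLTm) modulo the smallest
   congruence (SLEq) containing the category laws and the listed relations. *)
From Stdlib Require Import List.
Import ListNotations.
Set Implicit Arguments.

Inductive SLTm {J : Type} : list J -> list J -> Type :=
| sl_id : forall l, SLTm l l
| sl_comp : forall l1 l2 l3, SLTm l2 l3 -> SLTm l1 l2 -> SLTm l1 l3
| sl_sw : forall (a b : J) l, SLTm (a :: b :: l) (b :: a :: l)
| sl_cons : forall (x : J) l l', SLTm l l' -> SLTm (x :: l) (x :: l').

Arguments sl_id {J} l.
Arguments sl_comp {J l1 l2 l3} g f.
Arguments sl_sw {J} a b l.
Arguments sl_cons {J} x {l l'} f.

Inductive SLEq {J : Type} : forall l l' : list J, SLTm l l' -> SLTm l l' -> Prop :=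
| sle_refl : forall l l' (f : SLTm l l'), SLEq f f
| sle_sym : forall l l' (f g : SLTm l l'), SLEq f g -> SLEq g f
| sle_trans : forall l l' (f g h : SLTm l l'), SLEq f g -> SLEq g h -> SLEq f h
| sle_comp_cong : forall l1 l2 l3 (g g' : SLTm l2 l3) (f f' : SLTm l1 l2),
    SLEq g g' -> SLEq f f' -> SLEq (sl_comp g f) (sl_comp g' f')
| sle_cons_cong : forall x l l' (f f' : SLTm l l'),
    SLEq f f' -> SLEq (sl_cons x f) (sl_cons x f')
| sle_id_l : forall l l' (f : SLTm l l'), SLEq (sl_comp (sl_id l') f) f
| sle_id_r : forall l l' (f : SLTm l l'), SLEq (sl_comp f (sl_id l)) f
| sle_assoc : forall l1 l2 l3 l4 (h : SLTm l3 l4) (g : SLTm l2 l3) (f : SLTm l1 l2),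
    SLEq (sl_comp h (sl_comp g f)) (sl_comp (sl_comp h g) f)
| sle_cons_id : forall x l, SLEq (sl_cons x (sl_id l)) (sl_id (x :: l))
| sle_cons_comp : forall x l1 l2 l3 (g : SLTm l2 l3) (f : SLTm l1 l2),
    SLEq (sl_cons x (sl_comp g f)) (sl_comp (sl_cons x g) (sl_cons x f))
| sle_sw_nat : forall a b l l' (f : SLTm l l'),
    SLEq (sl_comp (sl_sw a b l') (sl_cons a (sl_cons b f)))
         (sl_comp (sl_cons b (sl_cons a f)) (sl_sw a b l))
| sle_sw_inv : forall a b l,
    SLEq (sl_comp (sl_sw b a l) (sl_sw a b l)) (sl_id (a :: b :: l))
| sle_sw_yb : forall a b c l,
    SLEq (sl_comp (sl_sw b c (a :: l)) (sl_comp (sl_cons b (sl_sw a c l)) (sl_sw a b (c :: l))))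
         (sl_comp (sl_cons c (sl_sw a b l)) (sl_comp (sl_sw a c (b :: l)) (sl_cons a (sl_sw b c l)))).

Definition sl_linear {J : Type} (l : list J) : Prop := NoDup l.

(* Main.v *)
Require Import Defs.
From Stdlib Require Import List Setoid Morphisms Program.Equality Permutation.
Import ListNotations.

#[local] Instance SLEq_Equiv J l l' : Equivalence (@SLEq J l l').
Proof. split; red; intros; eauto using SLEq. Qed.
#[local] Instance comp_Proper J l1 l2 l3 : Proper (@SLEq J l2 l3 ==> @SLEq J l1 l2 ==> @SLEq J l1 l3) (@sl_comp J l1 l2 l3).
Proof. repeat red; intros; apply sle_comp_cong; auto. Qed.
#[local] Instance cons_Proper J x l l' : Proper (@SLEq J l l' ==> @SLEq J (x::l) (x::l')) (@sl_cons J x l l').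
Proof. repeat red; intros; apply sle_cons_cong; auto. Qed.

Set Implicit Arguments.
Inductive IsIns {J} (x:J) : forall m r, SLTm (x::m) r -> Prop :=
| ii_here m : @IsIns J x m (x::m) (sl_id (x::m))
| ii_there y m r (i : SLTm (x::m) r) : @IsIns J x m r i -> @IsIns J x (y::m) (y::r) (sl_comp (sl_cons y i) (sl_sw x y m)).
Arguments IsIns {J} x {m r} _.

Inductive IsNF {J} : forall l l' : list J, SLTm l l' -> Prop :=
| nf_nil : @IsNF J [] [] (sl_id [])
| nf_cons x l m r (f : SLTm l m) (i : SLTm (x::m) r) : @IsNF J l m f -> IsIns x i -> @IsNF J (x::l) r (sl_comp i (sl_cons x f)).
Arguments IsNF {J l l'} _.

Lemma ins_swap J (b : J) : forall m1 r (i1 : SLTm (b::m1) r), IsIns b i1 ->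
  forall a m2 (i2 : SLTm (a::m2) m1), IsIns a i2 ->
  exists m3 (j1 : SLTm (a::m3) r) (j2 : SLTm (b::m2) m3), IsIns a j1 /\ IsIns b j2 /\
   SLEq (sl_comp i1 (sl_comp (sl_cons b i2) (sl_sw a b m2))) (sl_comp j1 (sl_cons a j2)).
Proof.
  induction 1 as [m1 | y m1' r' i1' Hi1' IH]; intros a m2 i2 Hi2.
  - exists (b::m2), (sl_comp (sl_cons b i2) (sl_sw a b m2)), (sl_id (b::m2)).
    split; [constructor; auto|split; [constructor|]].
    rewrite sle_cons_id, sle_id_r, sle_id_l. reflexivity.
  - dependent destruction Hi2.
    + exists r', (sl_id (y::r')), i1'. split; [constructor|split; [auto|]].
      rewrite sle_cons_id, sle_id_l, <- sle_assoc, sle_sw_inv, sle_id_r, sle_id_l. reflexivity.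
    + rename i into i2'. rename m into m2. destruct (IH _ _ _ Hi2) as (m3' & j1' & j2' & Hj1 & Hj2 & E).
      exists (y::m3'), (sl_comp (sl_cons y j1') (sl_sw a y m3')), (sl_comp (sl_cons y j2') (sl_sw b y m2)).
      split; [constructor; auto|split; [constructor; auto|]].
      rewrite sle_cons_comp, sle_cons_comp.
      transitivity (sl_comp (sl_cons y i1') (sl_comp (sl_comp (sl_sw b y m1') (sl_cons b (sl_cons y i2'))) (sl_comp (sl_cons b (sl_sw a y m2)) (sl_sw a b (y::m2))))).
      { rewrite !sle_assoc. reflexivity. }
      rewrite sle_sw_nat.
      transitivity (sl_comp (sl_comp (sl_cons y i1') (sl_cons y (sl_cons b i2'))) (sl_comp (sl_sw b y (a::m2)) (sl_comp (sl_cons b (sl_sw a y m2)) (sl_sw a b (y::m2))))).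
      { rewrite !sle_assoc. reflexivity. }
      rewrite sle_sw_yb, <- sle_cons_comp.
      transitivity (sl_comp (sl_comp (sl_cons y (sl_comp i1' (sl_cons b i2'))) (sl_cons y (sl_sw a b m2))) (sl_comp (sl_sw a y (b :: m2)) (sl_cons a (sl_sw b y m2)))).
      { rewrite !sle_assoc. reflexivity. }
      rewrite <- sle_cons_comp, <- sle_assoc, E, sle_cons_comp.
      transitivity (sl_comp (sl_cons y j1') (sl_comp (sl_comp (sl_cons y (sl_cons a j2')) (sl_sw a y (b :: m2))) (sl_cons a (sl_sw b y m2)))).
      { rewrite !sle_assoc. reflexivity. }
      rewrite <- sle_sw_nat. rewrite !sle_assoc. reflexivity.
Qed.

Definition HasNF {J} {l l' : list J} (t : SLTm l l') := exists n, IsNF n /\ SLEq t n.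

Lemma nf_comp J : forall (l1 l2 : list J) (t : SLTm l1 l2) l3 (n : SLTm l2 l3), IsNF n -> HasNF (sl_comp n t).
Proof.
  induction t as [l|l1 l2 l3' g IHg f IHf|a b l|x l l' t IH]; intros l3 n Hn.
  - exists n; split; auto. apply sle_id_r.
  - destruct (IHg _ n Hn) as (n' & Hn' & E1).
    destruct (IHf _ n' Hn') as (n'' & Hn'' & E2).
    exists n''; split; auto. rewrite sle_assoc, E1, E2. reflexivity.
  - dependent destruction Hn. rename i into i1, f into f1.
    dependent destruction Hn. rename i into i2, f into f2.
    destruct (@ins_swap _ _ _ _ _ H0 _ _ _ H) as (m3 & j1 & j2 & Hj1 & Hj2 & E).
    exists (sl_comp j1 (sl_cons a (sl_comp j2 (sl_cons b f2)))). split.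
    { constructor; auto. constructor; auto. }
    rewrite !sle_cons_comp.
    transitivity (sl_comp (sl_comp i1 (sl_cons b i2)) (sl_comp (sl_cons b (sl_cons a f2)) (sl_sw a b l))).
    { rewrite !sle_assoc. reflexivity. }
    rewrite <- sle_sw_nat, !sle_assoc. rewrite sle_assoc in E. rewrite E. reflexivity.
  - dependent destruction Hn.
    destruct (IH _ f Hn) as (n'' & Hn'' & E).
    exists (sl_comp i (sl_cons x n'')). split. { constructor; auto. }
    rewrite <- sle_assoc, <- sle_cons_comp, E. reflexivity.
Qed.

Lemma id_nf J : forall l : list J, HasNF (sl_id l).
Proof.
  induction l as [|x l IH].
  - exists (sl_id []). split; [constructor|reflexivity].
  - destruct IH as (n & Hn & E).
    exists (sl_comp (sl_id (x::l)) (sl_cons x n)). split. { constructor; auto. constructor. }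
    rewrite <- E, sle_cons_id, sle_id_l. reflexivity.
Qed.

Lemma all_nf J (l l' : list J) (t : SLTm l l') : HasNF t.
Proof.
  destruct (id_nf l') as (n & Hn & E).
  destruct (nf_comp t Hn) as (n' & Hn' & E').
  exists n'; split; auto. rewrite <- E', <- E, sle_id_l. reflexivity.
Qed.

Lemma tm_perm J (l l' : list J) (t : SLTm l l') : Permutation l l'.
Proof. induction t; eauto using Permutation, perm_swap. Qed.

Lemma ins_perm J (x : J) m r (i : SLTm (x::m) r) : IsIns x i -> ~ In x m ->
  forall m' (i' : SLTm (x::m') r), IsIns x i' -> ~ In x m' -> m = m'.
Proof.
  induction 1 as [m|y m r i Hi IH]; intros Hx m' i' Hi' Hx'.
  - dependent destruction Hi'. reflexivity. exfalso; first [apply Hx; left; reflexivity|apply Hx'; left; reflexivity].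
  - dependent destruction Hi'. exfalso; first [apply Hx; left; reflexivity|apply Hx'; left; reflexivity].
    f_equal. eapply IH; eauto. intro; apply Hx; right; auto. intro; apply Hx'; right; auto.
Qed.

Lemma ins_uniq J (x : J) m r (i : SLTm (x::m) r) : IsIns x i -> ~ In x m ->
  forall (i' : SLTm (x::m) r), IsIns x i' -> SLEq i i'.
Proof.
  induction 1 as [m|y m r i Hi IH]; intros Hx i' Hi'.
  - dependent destruction Hi'. reflexivity. exfalso; first [apply Hx; left; reflexivity|apply Hx'; left; reflexivity].
  - dependent destruction Hi'. exfalso; first [apply Hx; left; reflexivity|apply Hx'; left; reflexivity].
    rewrite (IH (fun H => Hx (or_intror H)) i0 Hi'). reflexivity.
Qed.

Lemma nf_uniq J (l l' : list J) (n1 : SLTm l l') : IsNF n1 -> NoDup l ->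
  forall n2, IsNF n2 -> SLEq n1 n2.
Proof.
  induction 1 as [|x l m r f i Hf IH Hi]; intros Hnd n2 Hn2.
  - dependent destruction Hn2. reflexivity.
  - inversion Hnd as [|? ? Hxl Hl]; subst.
    dependent destruction Hn2. rename m0 into m', f0 into f', i0 into i'.
    assert (Hxm : ~ In x m) by (intro H'; apply Hxl; eapply Permutation_in; [symmetry; apply (tm_perm f)|auto]).
    assert (Hxm' : ~ In x m') by (intro H'; apply Hxl; eapply Permutation_in; [symmetry; apply (tm_perm f')|auto]).
    assert (m = m') by (eapply ins_perm; eauto). subst m'.
    rewrite (ins_uniq Hi Hxm H), (IH Hl f' Hn2). reflexivity.
Qed.

Theorem lemma4p11 (J : Type) (L1 L2 : list J) :
  (inhabited (SLTm L1 L2) -> (sl_linear L2 <-> sl_linear L1)) /\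
  ((sl_linear L1 \/ sl_linear L2) -> forall f g : SLTm L1 L2, SLEq f g).
Proof.
  split.
  - intros [t]. unfold sl_linear. pose proof (tm_perm t).
    split; intro.
    + eapply Permutation_NoDup; [apply Permutation_sym; eassumption|assumption].
    + eapply Permutation_NoDup; eassumption.
  - intros H f g.
    assert (Hl : NoDup L1).
    { destruct H as [H|H]; auto. eapply Permutation_NoDup; [symmetry; apply (tm_perm f)|exact H]. }
    destruct (all_nf f) as (n1 & Hn1 & E1).
    destruct (all_nf g) as (n2 & Hn2 & E2).
    rewrite E1, E2. apply (nf_uniq Hn1 Hl Hn2).
Qed.
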